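(* Assume the CFL condition $0\le\lambda\sup_{w\ge1}W'(w)\le1$. Let $(y^0_i)_{i\in\mathbb Z}$ be a bounded sequence with $y^0_i\ge1$, and define recursively for $n\ge0$ $$w^n_i=\sum_{j\ge i}\Phi_{ij\alpha}y^n_j,\qquad y^{n+1}_i=y^n_i+\lambda\bigl(W(w^n_{i+1})-W(w^n_i)\bigr),\quad i\in\mathbb Z.$$ Then for every $\alpha>0$, every $i\in\mathbb Z$ and every $n\ge0$, $$\inf_{j\in\mathbb Z}y^0_j\le y^n_i\le\sup_{j\in\mathbb Z}y^0_j.$$
   Context: Kernel: $\Phi:[0,\infty)\to[0,\infty)$ is non-increasing with $\int_0^\infty\Phi(z)\,dz=1$ and $\int_0^\infty z\Phi(z)\,dz<\infty$; for $\alpha>0$, $\Phi_\alpha(z)=\alpha^{-1}\Phi(z/\alpha)$. Flux: $V\in C^1([0,\infty))$ is non-increasing and $W:[1,\infty)\to\mathbb R$, $W(w)=V(1/w)$. Discretization: $\Delta z>0$, $\Delta t>0$, $\lambda=\Delta t/\Delta z$, $z_j=(j-\tfrac12)\Delta z$ for $j\in\tfrac12\mathbb Z$, and for integers $j\ge i$, $\Phi_{ij\alpha}=\int_{z_{j-1/2}}^{z_{j+1/2}}\Phi_\alpha(\zeta-z_{i-1/2})\,d\zeta$. *)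

(* Defs.v *)
From Stdlib Require Import Reals ZArith.
From Coquelicot Require Import Coquelicot.
Open Scope R_scope.

Definition Phi_a (Phi : R -> R) (alpha z : R) : R := / alpha * Phi (z / alpha).

Definition W (V : R -> R) (w : R) : R := V (/ w).

(* z_j = (j - 1/2) dz, so z_{j-1/2} = (j-1) dz and z_{j+1/2} = j dz.
   Phi_{ij alpha} = int_{z_{j-1/2}}^{z_{j+1/2}} Phi_alpha(zeta - z_{i-1/2}) dzeta *)
Definition Phi_ij (Phi : R -> R) (alpha dz : R) (i j : Z) : R :=
  RInt (fun zeta => Phi_a Phi alpha (zeta - (IZR i - 1) * dz))
       ((IZR j - 1) * dz) (IZR j * dz).

Definition wconv (Phi : R -> R) (alpha dz : R) (y : Z -> R) (i : Z) : R :=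
  Series (fun k : nat =>
    Phi_ij Phi alpha dz i (i + Z.of_nat k)%Z * y (i + Z.of_nat k)%Z).

(* y^{n+1}_i = y^n_i + lambda (W(w^n_{i+1}) - W(w^n_i)), lambda = dt/dz *)
Fixpoint ysol (Phi V : R -> R) (alpha dz dt : R) (y0 : Z -> R) (n : nat) : Z -> R :=
  match n with
  | O => y0
  | S m => fun i =>
      let y := ysol Phi V alpha dz dt y0 m in
      y i + (dt / dz) * (W V (wconv Phi alpha dz y (i + 1)%Z)
                         - W V (wconv Phi alpha dz y i))
  end.

(* Main.v *)
Require Import Defs.
From Stdlib Require Import Reals ZArith Lra Lia.
From Coquelicot Require Import Coquelicot.
Open Scope R_scope.

Lemma tail_lemma (Phi : R -> R) :
  is_RInt_gen Phi (at_point 0) (Rbar_locally p_infty) 1 ->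
  forall eps : posreal, exists B, forall b, B < b ->
    exists v, is_RInt Phi 0 b v /\ Rabs (v - 1) < eps.
Proof.
  intros H eps.
  specialize (H (fun v => Rabs (v - 1) < eps)).
  assert (Hl : locally 1 (fun v => Rabs (v - 1) < eps)).
  { exists eps. intros y Hy. exact Hy. }
  specialize (H Hl). unfold filtermapi in H.
  destruct H as [Q R HQ HR HP]. destruct HR as [B HB].
  exists B. intros b Hb. destruct (HP 0 b HQ (HB b Hb)) as [v [Hv1 Hv2]].
  exists v. split; assumption.
Qed.

Lemma ex_RInt_0 (Phi : R -> R) :
  is_RInt_gen Phi (at_point 0) (Rbar_locally p_infty) 1 ->
  forall b, 0 <= b -> ex_RInt Phi 0 b.
Proof.
  intros H b Hb. destruct (tail_lemma Phi H (mkposreal 1 Rlt_0_1)) as [B HB].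
  destruct (HB (Rmax B b + 1)) as [v [Hv _]].
  { pose proof (Rmax_l B b). lra. }
  apply (ex_RInt_Chasles_1 (V:=R_CompleteNormedModule) Phi 0 b (Rmax B b + 1)).
  { pose proof (Rmax_r B b). lra. }
  exists v. exact Hv.
Qed.

Definition aa (Phi : R -> R) (h : R) (k : nat) : R := RInt Phi (INR k * h) (INR (S k) * h).


Lemma aa_ex Phi h (Hh : 0 < h) (Hint : forall b, 0 <= b -> @ex_RInt R_NormedModule Phi 0 b) k :
  @ex_RInt R_NormedModule Phi (INR k * h) (INR (S k) * h).
Proof.
  apply (ex_RInt_Chasles_2 (V:=R_CompleteNormedModule) Phi 0).
  - rewrite S_INR. pose proof (pos_INR k). nra.
  - apply Hint. rewrite S_INR. pose proof (pos_INR k). nra.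
Qed.

Lemma aa_nonneg Phi h (Hh : 0 < h) (Hint : forall b, 0 <= b -> @ex_RInt R_NormedModule Phi 0 b)
  (Hn : forall z, 0 <= z -> 0 <= Phi z) k : 0 <= aa Phi h k.
Proof.
  unfold aa. apply RInt_ge_0.
  - rewrite S_INR. nra.
  - apply aa_ex; auto.
  - intros x Hx. apply Hn. pose proof (pos_INR k). nra.
Qed.

Lemma aa_decr Phi h (Hh : 0 < h) (Hint : forall b, 0 <= b -> @ex_RInt R_NormedModule Phi 0 b)
  (Hd : forall x y, 0 <= x -> x <= y -> Phi y <= Phi x) k : aa Phi h (S k) <= aa Phi h k.
Proof.
  unfold aa.
  assert (E : RInt Phi (INR (S k) * h) (INR (S (S k)) * h)
            = RInt (fun y => scal 1 (Phi (1 * y + h))) (INR k * h) (INR (S k) * h)).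
  { rewrite (RInt_comp_lin (V:=R_CompleteNormedModule) Phi 1 h).
    - f_equal; rewrite !S_INR; ring.
    - replace (1 * (INR k * h) + h) with (INR (S k) * h) by (rewrite S_INR; ring).
      replace (1 * (INR (S k) * h) + h) with (INR (S (S k)) * h) by (rewrite !S_INR; ring).
      apply aa_ex; auto. }
  rewrite E. apply RInt_le.
  - rewrite S_INR. nra.
  - apply ex_RInt_comp_lin.
    replace (1 * (INR k * h) + h) with (INR (S k) * h) by (rewrite S_INR; ring).
    replace (1 * (INR (S k) * h) + h) with (INR (S (S k)) * h) by (rewrite !S_INR; ring).
    apply aa_ex; auto.
  - apply aa_ex; auto.
  - intros x Hx. change (scal 1 (Phi (1 * x + h))) with (1 * Phi (1 * x + h)).
    rewrite Rmult_1_l. apply Hd; pose proof (pos_INR k); nra.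
Qed.

Lemma aa_sum Phi h (Hh : 0 < h) (Hint : forall b, 0 <= b -> @ex_RInt R_NormedModule Phi 0 b) N :
  sum_n (aa Phi h) N = RInt Phi 0 (INR (S N) * h).
Proof.
  induction N.
  - rewrite sum_O. unfold aa. simpl. now rewrite Rmult_0_l.
  - rewrite sum_Sn, IHN. unfold aa.
    rewrite <- (RInt_Chasles (V:=R_CompleteNormedModule) Phi 0 (INR (S N) * h) (INR (S (S N)) * h)).
    + reflexivity.
    + apply Hint. pose proof (pos_INR (S N)). nra.
    + apply aa_ex; auto.
Qed.

Lemma aa_series Phi h (Hh : 0 < h)
  (HPhi : is_RInt_gen Phi (at_point 0) (Rbar_locally p_infty) 1) :
  is_series (aa Phi h) 1.
Proof.
  pose proof (ex_RInt_0 Phi HPhi) as Hint.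
  apply (proj1 (is_lim_seq_spec _ 1)).
  intros eps. destruct (tail_lemma Phi HPhi eps) as [B HB].
  destruct (nfloor_ex (Rmax 0 (B / h))) as [n Hn]. { apply Rmax_l. }
  exists n. intros N HN. rewrite aa_sum by auto.
  destruct (HB (INR (S N) * h)) as [v [Hv1 Hv2]].
  { apply le_INR in HN. rewrite S_INR.
    pose proof (Rmax_r 0 (B/h)). 
    assert (B / h < INR N + 1) by lra.
    apply Rmult_lt_compat_r with (r := h) in H0; auto.
    unfold Rdiv in H0. rewrite Rmult_assoc, Rinv_l in H0; lra. }
  rewrite (is_RInt_unique _ _ _ _ Hv1). exact Hv2.
Qed.

Lemma wsum_bounds (b z : nat -> R) (s m M : R) :
  (forall k, 0 <= b k) -> is_series b s -> 0 <= m ->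
  (forall k, m <= z k <= M) ->
  ex_series (fun k => b k * z k) /\
  m * s <= Series (fun k => b k * z k) <= M * s.
Proof.
  intros Hb Hs Hm Hz.
  assert (Hex : ex_series b) by (exists s; exact Hs).
  assert (HbM : ex_series (fun k => M * b k)).
  { apply (ex_series_scal_l M b Hex). }
  assert (HE : ex_series (fun k => b k * z k)).
  { apply (ex_series_le (fun k => b k * z k) (fun k => M * b k)); auto.
    intros k. change (norm (b k * z k)) with (Rabs (b k * z k)).
    specialize (Hz k). specialize (Hb k).
    rewrite Rabs_right by nra. nra. }
  split; [exact HE|]. split.
  - rewrite <- (is_series_unique b s Hs), <- Series_scal_l.
    apply Series_le; auto. intros k. specialize (Hz k). specialize (Hb k). nra.
  - rewrite <- (is_series_unique b s Hs), <- Series_scal_l.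
    apply Series_le; auto. intros k. specialize (Hz k). specialize (Hb k). nra.
Qed.

Lemma tele (a : nat -> R) : is_series a 1 ->
  is_series (fun k => a k - a (S k)) (a 0%nat).
Proof.
  intros H.
  assert (H1 : is_series (fun k => a (S k)) (1 - a 0%nat)).
  { apply (is_series_incr_1 a (1 - a 0%nat)).
    assert (E : (1 - a 0%nat) + a 0%nat = 1) by ring.
    change (is_series a ((1 - a 0%nat) + a 0%nat)). rewrite E. exact H. }
  pose proof (is_series_minus _ _ _ _ H H1) as H2.
  change (is_series (fun k => a k + - a (S k)) (1 + - (1 - a 0%nat))) in H2.
  assert (E : 1 + - (1 - a 0%nat) = a 0%nat) by ring. rewrite E in H2. exact H2.
Qed.

Lemma W_ex_derive V V' (HV_der : forall x, 0 <= x -> is_derive V x (V' x)) x :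
  0 < x -> ex_derive (W V) x.
Proof.
  intros Hx. unfold W.
  apply (ex_derive_comp V Rinv x).
  - exists (V' (/ x)). apply HV_der. left. apply Rinv_0_lt_compat. exact Hx.
  - auto_derive. lra.
Qed.

Lemma W_lip V V' L (HV_der : forall x, 0 <= x -> is_derive V x (V' x))
  (HV_noninc : forall x y, 0 <= x -> x <= y -> V y <= V x)
  (HL : forall w, 1 <= w -> Derive (W V) w <= L) u v :
  1 <= u -> u <= v -> 0 <= W V v - W V u <= L * (v - u).
Proof.
  intros Hu Huv. split.
  - unfold W. assert (V (/ u) <= V (/ v)).
    { apply HV_noninc. left; apply Rinv_0_lt_compat; lra.
      apply Rinv_le_contravar; lra. }
    lra.
  - destruct (MVT_gen (W V) u v (Derive (W V))) as [c [Hc Heq]].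
    + intros x Hx. apply Derive_correct. apply (W_ex_derive V V' HV_der).
      rewrite Rmin_left in Hx by lra. lra.
    + intros x Hx. apply continuity_pt_filterlim.
      apply (ex_derive_continuous (W V)). apply (W_ex_derive V V' HV_der).
      rewrite Rmin_left in Hx by lra. lra.
    + rewrite Rmin_left in Hc by lra. rewrite Rmax_right in Hc by lra.
      rewrite Heq. apply Rmult_le_compat_r. lra. apply HL. lra.
Qed.

Lemma CFL_extract (c : R) (S : R -> Prop) (x0 : R) :
  0 < c -> S x0 ->
  Rbar_le 0 (Rbar_mult c (Lub_Rbar S)) /\ Rbar_le (Rbar_mult c (Lub_Rbar S)) 1 ->
  exists L, 0 <= c * L <= 1 /\ forall s, S s -> s <= L.
Proof.
  intros Hc HS [H1 H2].
  destruct (Lub_Rbar_correct S) as [Hub _].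
  destruct (Lub_Rbar S) as [L| |] eqn:E.
  - exists L. split. simpl in H1, H2. split; assumption.
    intros s Hs. apply (Hub s Hs).
  - exfalso. unfold Rbar_mult, Rbar_mult' in H2.
    destruct (Rle_dec 0 c) as [h|h]; [|lra].
    destruct (Rle_lt_or_eq_dec 0 c h) as [h'|h']; [|lra]. simpl in H2. exact H2.
  - exfalso. apply (Hub x0 HS).
Qed.

Lemma Phi_ij_aa Phi alpha dz i k (Ha : 0 < alpha) (Hdz : 0 < dz)
  (Hint : forall b, 0 <= b -> @ex_RInt R_NormedModule Phi 0 b) :
  Phi_ij Phi alpha dz i (i + Z.of_nat k) = aa Phi (dz / alpha) k.
Proof.
  unfold Phi_ij, aa, Phi_a.
  rewrite plus_IZR, <- INR_IZR_INZ.
  set (v := - ((IZR i - 1) * dz) / alpha).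
  assert (E1 : / alpha * ((IZR i + INR k - 1) * dz) + v = INR k * (dz / alpha))
    by (unfold v; field; lra).
  assert (E2 : / alpha * ((IZR i + INR k) * dz) + v = INR (S k) * (dz / alpha))
    by (unfold v; rewrite S_INR; field; lra).
  transitivity (RInt (fun y => scal (/ alpha) (Phi (/ alpha * y + v)))
                  ((IZR i + INR k - 1) * dz) ((IZR i + INR k) * dz)).
  - apply RInt_ext. intros x _. change (scal (/ alpha) (Phi (/ alpha * x + v)))
      with (/ alpha * Phi (/ alpha * x + v)).
    f_equal. f_equal. unfold v. field. lra.
  - rewrite (RInt_comp_lin (V:=R_CompleteNormedModule) Phi (/ alpha) v).
    + rewrite E1, E2. reflexivity.
    + rewrite E1, E2. apply aa_ex; auto. apply Rdiv_lt_0_compat; lra.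
Qed.

Lemma step_lemma (Phi V V' : R -> R) (dz dt alpha L m M : R) (y : Z -> R)
  (HPhi_nonneg : forall z, 0 <= z -> 0 <= Phi z)
  (HPhi_noninc : forall x y, 0 <= x -> x <= y -> Phi y <= Phi x)
  (HPhi_int : is_RInt_gen Phi (at_point 0) (Rbar_locally p_infty) 1)
  (HV_der : forall x, 0 <= x -> is_derive V x (V' x))
  (HV_noninc : forall x y, 0 <= x -> x <= y -> V y <= V x)
  (Hdz : 0 < dz) (Hdt : 0 < dt) (Halpha : 0 < alpha)
  (HL1 : 0 <= dt / dz * L <= 1) (HL : forall w, 1 <= w -> Derive (W V) w <= L)
  (Hm : 1 <= m) (Hy : forall j, m <= y j <= M) (i : Z) :
  m <= y i + (dt / dz) * (W V (wconv Phi alpha dz y (i + 1)%Z)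
                         - W V (wconv Phi alpha dz y i)) <= M.
Proof.
  pose proof (ex_RInt_0 Phi HPhi_int) as Hint.
  assert (Hh : 0 < dz / alpha) by (apply Rdiv_lt_0_compat; lra).
  set (a := aa Phi (dz / alpha)).
  assert (Ha : forall k, 0 <= a k) by (intros; apply aa_nonneg; auto).
  assert (Hdec : forall k, a (S k) <= a k) by (intros; apply aa_decr; auto).
  assert (Hser : is_series a 1) by (apply aa_series; auto).
  assert (Hw : forall i', wconv Phi alpha dz y i' = Series (fun k => a k * y (i' + Z.of_nat k)%Z)).
  { intros i'. unfold wconv. apply Series_ext. intros k. unfold a.
    rewrite Phi_ij_aa; auto. }
  set (z := fun k : nat => y (i + 1 + Z.of_nat k)%Z).
  assert (Hz : forall k, m <= z k <= M) by (intros; apply Hy).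
  assert (Hm0 : 0 <= m) by lra.
  destruct (wsum_bounds a z 1 m M Ha Hser Hm0 Hz) as [Hexz [Hz1 Hz2]].
  destruct (wsum_bounds a (fun k => y (i + Z.of_nat k)%Z) 1 m M Ha Hser Hm0 (fun k => Hy _))
    as [Hexy [Hy1 Hy2]].
  assert (Hd0 : forall k, 0 <= a k - a (S k)) by (intros k; specialize (Hdec k); lra).
  destruct (wsum_bounds (fun k => a k - a (S k)) z (a 0%nat) m M Hd0 (tele a Hser) Hm0 Hz)
    as [Hexd [Hd1 Hd2]].
  assert (Hexs : ex_series (fun k => a (S k) * z k)).
  { apply (ex_series_incr_1 (fun k => a k * y (i + Z.of_nat k)%Z)) in Hexy.
    eapply ex_series_ext; [|exact Hexy]. intros k. simpl. unfold z.
    f_equal. f_equal. lia. }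
  assert (Ewi : wconv Phi alpha dz y i = a 0%nat * y i + Series (fun k => a (S k) * z k)).
  { rewrite Hw, Series_incr_1 by exact Hexy. f_equal.
    - simpl. rewrite Z.add_0_r. reflexivity.
    - apply Series_ext. intros k. unfold z. f_equal. f_equal. lia. }
  assert (Ewi1 : wconv Phi alpha dz y (i + 1)%Z = Series (fun k => a k * z k)).
  { rewrite Hw. reflexivity. }
  assert (Ediff : Series (fun k => a k * z k) - Series (fun k => a (S k) * z k)
                  = Series (fun k => (a k - a (S k)) * z k)).
  { rewrite <- Series_minus by assumption. apply Series_ext. intros k. ring. }
  assert (Ha01 : a 0%nat <= 1).
  { assert (H1 : is_series (fun k => a (S k)) (1 - a 0%nat)).
    { apply (is_series_incr_1 a (1 - a 0%nat)).
      assert (E : (1 - a 0%nat) + a 0%nat = 1) by ring.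
      change (is_series a ((1 - a 0%nat) + a 0%nat)). rewrite E. exact Hser. }
    assert (H2 : Series (fun _ : nat => 0) <= Series (fun k => a (S k))).
    { apply Series_le. intros k. specialize (Ha (S k)). lra. exists (1 - a 0%nat). exact H1. }
    rewrite (is_series_unique _ _ H1) in H2.
    assert (H3 : Series (fun _ : nat => 0) = 0).
    { rewrite (Series_ext (fun _ : nat => 0) (fun n => 0 * a n)) by (intros; ring).
      rewrite Series_scal_l. ring. }
    lra. }
  rewrite <- Hw in Hy1, Hy2.
  rewrite <- Ewi1 in Hz1, Hz2.
  set (wi := wconv Phi alpha dz y i) in *.
  set (wi1 := wconv Phi alpha dz y (i + 1)%Z) in *.
  assert (HD : a 0%nat * (m - y i) <= wi1 - wi <= a 0%nat * (M - y i)).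
  { rewrite Ewi1, Ewi. pose proof Ediff. lra. }
  set (c := dt / dz) in *.
  assert (Hc : 0 < c) by (unfold c; apply Rdiv_lt_0_compat; lra).
  specialize (Hy i). specialize (Ha 0%nat).
  destruct (Rle_dec wi wi1) as [Hle|Hlt].
  - destruct (W_lip V V' L HV_der HV_noninc HL wi wi1) as [HW1 HW2]; try lra.
    set (dW := W V wi1 - W V wi) in *.
    assert (c * dW <= c * L * (wi1 - wi)) by nra.
    assert (c * L * (wi1 - wi) <= c * L * (a 0%nat * (M - y i))) by nra.
    assert (c * L * (a 0%nat * (M - y i)) <= M - y i) by nra.
    split; nra.
  - destruct (W_lip V V' L HV_der HV_noninc HL wi1 wi) as [HW1 HW2]; try lra.
    set (dW := W V wi - W V wi1) in *.
    assert (c * dW <= c * L * (wi - wi1)) by nra.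
    assert (c * L * (wi - wi1) <= c * L * (a 0%nat * (y i - m))) by nra.
    assert (c * L * (a 0%nat * (y i - m)) <= y i - m) by nra.
    assert (c * (W V wi1 - W V wi) = - (c * dW)) by (unfold dW; ring).
    assert (0 <= c * dW) by nra.
    split; lra.
Qed.

Theorem lemma3p1 (Phi V V' : R -> R) (dz dt alpha : R) (y0 : Z -> R)
  (* kernel *)
  (HPhi_nonneg : forall z, 0 <= z -> 0 <= Phi z)
  (HPhi_noninc : forall x y, 0 <= x -> x <= y -> Phi y <= Phi x)
  (HPhi_int : is_RInt_gen Phi (at_point 0) (Rbar_locally p_infty) 1)
  (HPhi_mom : ex_RInt_gen (fun z => z * Phi z) (at_point 0) (Rbar_locally p_infty))
  (* flux: V in C^1([0,oo)), non-increasing *)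
  (HV_der : forall x, 0 <= x -> is_derive V x (V' x))
  (HV'_cont : forall x, 0 <= x -> continuous V' x)
  (HV_noninc : forall x y, 0 <= x -> x <= y -> V y <= V x)
  (* discretization *)
  (Hdz : 0 < dz) (Hdt : 0 < dt)
  (* CFL: 0 <= lambda sup_{w>=1} W'(w) <= 1 *)
  (HCFL : Rbar_le 0 (Rbar_mult (dt / dz)
             (Lub_Rbar (fun s => exists w, 1 <= w /\ s = Derive (W V) w)))
          /\ Rbar_le (Rbar_mult (dt / dz)
             (Lub_Rbar (fun s => exists w, 1 <= w /\ s = Derive (W V) w))) 1)
  (* initial data *)
  (Hy0_bdd : exists M, forall j, Rabs (y0 j) <= M)
  (Hy0_ge1 : forall j, 1 <= y0 j)
  (Halpha : 0 < alpha) :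
  forall (i : Z) (n : nat),
    Rbar_le (Glb_Rbar (fun s => exists j, s = y0 j))
            (Finite (ysol Phi V alpha dz dt y0 n i))
    /\ Rbar_le (Finite (ysol Phi V alpha dz dt y0 n i))
               (Lub_Rbar (fun s => exists j, s = y0 j)).
Proof.
  destruct (CFL_extract (dt / dz) (fun s => exists w, 1 <= w /\ s = Derive (W V) w)
              (Derive (W V) 1)) as [L [HL1 HL]].
  { apply Rdiv_lt_0_compat; lra. }
  { exists 1. split; [lra|reflexivity]. }
  { exact HCFL. }
  assert (HL' : forall w, 1 <= w -> Derive (W V) w <= L).
  { intros w Hw. apply HL. exists w. split; [exact Hw|reflexivity]. }
  destruct Hy0_bdd as [Bd HBd].
  destruct (Lub_Rbar_correct (fun s => exists j, s = y0 j)) as [Hub Hleast].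
  destruct (Glb_Rbar_correct (fun s => exists j, s = y0 j)) as [Hlb Hgreat].
  destruct (Lub_Rbar (fun s => exists j, s = y0 j)) as [M| |] eqn:EM.
  2:{ exfalso. assert (H : Rbar_le p_infty Bd).
      { apply Hleast. intros s [j ->]. simpl. pose proof (HBd j).
        pose proof (Rle_abs (y0 j)). lra. }
      exact H. }
  2:{ exfalso. exact (Hub (y0 0%Z) (ex_intro _ 0%Z eq_refl)). }
  destruct (Glb_Rbar (fun s => exists j, s = y0 j)) as [m| |] eqn:Em.
  2:{ exfalso. exact (Hlb (y0 0%Z) (ex_intro _ 0%Z eq_refl)). }
  2:{ exfalso. assert (H : Rbar_le (-Bd) m_infty).
      { apply Hgreat. intros s [j ->]. simpl. pose proof (HBd j).
        pose proof (Rabs_pos (y0 j)). pose proof (Rle_abs (- y0 j)).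
        rewrite Rabs_Ropp in H1. lra. }
      exact H. }
  assert (Hm1 : 1 <= m).
  { assert (H : Rbar_le 1 m).
    { apply Hgreat. intros s [j ->]. simpl. apply Hy0_ge1. }
    exact H. }
  assert (Hy0 : forall j, m <= y0 j <= M).
  { intros j. split.
    - exact (Hlb (y0 j) (ex_intro _ j eq_refl)).
    - exact (Hub (y0 j) (ex_intro _ j eq_refl)). }
  assert (Hall : forall n j, m <= ysol Phi V alpha dz dt y0 n j <= M).
  { induction n as [|n IH].
    - exact Hy0.
    - intros j. simpl.
      apply (step_lemma Phi V V' dz dt alpha L m M); auto. }
  intros i n. simpl. exact (Hall n i).
Qed.
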